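(* Let $J\subseteq\mathbb{M}_2$ be a bigraded ideal and $f,g:\Sigma^{p,q}J\to\mathbb{M}_2$ two bigraded $\mathbb{M}_2$-module homomorphisms. If there is a nonzero homogeneous element $x\in J$ with $f(x)\neq0$ and $f(x)=g(x)$, then $f=g$.
   Context: $\mathbb{M}_2$ is the bigraded commutative $\mathbb{F}_2$-algebra with $\mathbb{F}_2$-basis the elements $\rho^m\tau^n$ ($m,n\ge0$) in bidegree $(m,m+n)$ and $\frac{\theta}{\rho^m\tau^n}$ ($m,n\ge 0$) in bidegree $(-m,-2-m-n)$; multiplication: $\rho^a\tau^b\cdot\rho^c\tau^d=\rho^{a+c}\tau^{b+d}$, $\rho^a\tau^b\cdot\frac{\theta}{\rho^c\tau^d}=\frac{\theta}{\rho^{c-a}\tau^{d-b}}$ if $a\le c,b\le d$ and $0$ otherwise, and the product of two elements of the form $\frac{\theta}{\rho^c\tau^d}$ is $0$. $\Sigma^{p,q}J$ is the shift with $(\Sigma^{p,q}J)^{a,b}=J^{a-p,b-q}$; module homomorphisms preserve bidegree. *)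

(* Defs.v *)
From Stdlib Require Import ZArith Bool.
Open Scope Z_scope.

(* Bidegrees of the basis elements of M_2:
   rho^m tau^n        sits in (m, m+n)          : exactly the (a,b) with 0 <= a <= b;
   theta/(rho^m tau^n) sits in (-m, -2-m-n)     : exactly the (a,b) with a <= 0, b <= a-2.
   Each bidegree contains at most one basis element, so the homogeneous
   component M_2^{a,b} is F_2 (= bool) if [M2deg a b], and 0 otherwise. *)
Definition posc (a b : Z) : bool := (0 <=? a) && (a <=? b).
Definition negc (a b : Z) : bool := (a <=? 0) && (b <=? a - 2).
Definition M2deg (a b : Z) : bool := posc a b || negc a b.

(* x : bool is an element of M_2^{a,b} (x = true is the basis element, if any). *)
Definition hom_elt (a b : Z) (x : bool) : Prop := x = true -> M2deg a b = true.

(* Whether the product of the basis elements in bidegrees (a,b) and (c,d) is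
   nonzero, following the multiplication table of M_2:
   rho^a tau^b * rho^c tau^d  = rho^(a+c) tau^(b+d)  (always nonzero);
   rho^a tau^b * theta/(rho^c tau^d) nonzero iff a <= c, b <= d, i.e. iff the
   product bidegree lies in the negative cone; theta-products vanish. *)
Definition mul_nz (a b c d : Z) : bool :=
  (posc a b && posc c d)
  || (posc a b && negc c d && negc (a + c) (b + d))
  || (negc a b && posc c d && negc (a + c) (b + d)).

Definition mulM2 (a b : Z) (r : bool) (c d : Z) (x : bool) : bool :=
  r && x && mul_nz a b c d.

Record bigraded_ideal (J : Z -> Z -> bool -> Prop) : Prop := {
  J_sub  : forall a b x, J a b x -> hom_elt a b x;
  J_zero : forall a b, J a b false;
  J_add  : forall a b x y, J a b x -> J a b y -> J a b (xorb x y);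
  J_mul  : forall a b r c d x, hom_elt a b r -> J c d x ->
             J (a + c) (b + d) (mulM2 a b r c d x)
}.

(* A bigraded M_2-module homomorphism f : Sigma^{p,q} J -> M_2.
   (Sigma^{p,q} J)^{a+p,b+q} = J^{a,b}; we write [f a b x] for f applied to
   x in J^{a,b}, viewed in (Sigma^{p,q} J)^{a+p,b+q}; its value lies in
   M_2^{a+p,b+q}.  Values of [f a b] outside J^{a,b} are irrelevant. *)
Record is_hom (p q : Z) (J : Z -> Z -> bool -> Prop) (f : Z -> Z -> bool -> bool) : Prop := {
  hom_deg : forall a b x, J a b x -> hom_elt (a + p) (b + q) (f a b x);
  hom_add : forall a b x y, J a b x -> J a b y ->
              f a b (xorb x y) = xorb (f a b x) (f a b y);
  hom_lin : forall a b r c d x, hom_elt a b r -> J c d x ->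
              f (a + c) (b + d) (mulM2 a b r c d x)
              = mulM2 a b r (c + p) (d + q) (f c d x)
}.

(* Main.v *)
Require Import Defs.
From Stdlib Require Import ZArith Bool Lia.
Open Scope Z_scope.

Definition Pp (a b : Z) : Prop := 0 <= a /\ a <= b.
Definition Np (a b : Z) : Prop := a <= 0 /\ b <= a - 2.
Definition Mp (a b : Z) : Prop := Pp a b \/ Np a b.
Definition MNp (a b c d : Z) : Prop :=
  (Pp a b /\ Pp c d) \/ (Pp a b /\ Np c d /\ Np (a + c) (b + d))
  \/ (Np a b /\ Pp c d /\ Np (a + c) (b + d)).

Lemma posc_iff a b : posc a b = true <-> Pp a b.
Proof. unfold posc, Pp. rewrite andb_true_iff, !Z.leb_le. tauto. Qed.
Lemma negc_iff a b : negc a b = true <-> Np a b.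
Proof. unfold negc, Np. rewrite andb_true_iff, !Z.leb_le. tauto. Qed.
Lemma M2deg_iff a b : M2deg a b = true <-> Mp a b.
Proof. unfold M2deg, Mp. rewrite orb_true_iff, posc_iff, negc_iff. tauto. Qed.
Lemma mul_nz_iff a b c d : mul_nz a b c d = true <-> MNp a b c d.
Proof.
  unfold mul_nz, MNp. rewrite !orb_true_iff, !andb_true_iff, !posc_iff, !negc_iff.
  tauto.
Qed.

Lemma arith x1 x2 y1 y2 p q :
  Mp x1 x2 -> Mp (x1+p) (x2+q) -> Mp y1 y2 -> Mp (y1+p) (y2+q) ->
  (Np x1 x2 -> Np (x1+p) (x2+q)) -> (Np y1 y2 -> Np (y1+p) (y2+q)) ->
  exists r1 r2 s1 s2, Mp r1 r2 /\ Mp s1 s2 /\ r1 + x1 = s1 + y1 /\ r2 + x2 = s2 + y2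
   /\ MNp r1 r2 x1 x2 /\ MNp s1 s2 y1 y2 /\
   (MNp r1 r2 (x1+p) (x2+q) \/ MNp s1 s2 (y1+p) (y2+q)).
Proof.
  unfold Mp, MNp.
  intros HX HXs HY HYs HNX HNY.
  destruct HX as [HX|HX]; destruct HY as [HY|HY].
  - assert (exists Z1 Z2, x1 <= Z1 /\ y1 <= Z1 /\ (Z1 = x1 \/ Z1 = y1) /\
       x2 - x1 <= Z2 - Z1 /\ y2 - y1 <= Z2 - Z1 /\ (Z2 - Z1 = x2 - x1 \/ Z2 - Z1 = y2 - y1))
      as [Z1 [Z2 HZ]].
    { destruct (Z.le_ge_cases x1 y1); destruct (Z.le_ge_cases (x2-x1) (y2-y1)).
      - exists y1, y2. lia.
      - exists y1, (y1 + (x2 - x1)). lia.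
      - exists x1, (x1 + (y2 - y1)). lia.
      - exists x1, x2. lia. }
    exists (Z1 - x1), (Z2 - x2), (Z1 - y1), (Z2 - y2).
    unfold Pp, Np in *.
    split; [left; lia|]. split; [left; lia|]. split; [lia|]. split; [lia|].
    split; [left; lia|]. split; [left; lia|].
    destruct HXs as [HXs|HXs]; [left; left; lia|].
    destruct HYs as [HYs|HYs]; [right; left; lia|].
    left; right; left; lia.
  - exists (y1 - x1), (y2 - x2), 0, 0. unfold Pp, Np in *.
    split; [right; lia|]. split; [left; lia|]. split; [lia|]. split; [lia|].
    split; [right; right; lia|]. split; [right; left; lia|].
    right. destruct HYs as [HYs|HYs]; [left; lia|right; left; lia].
  - exists 0, 0, (x1 - y1), (x2 - y2). unfold Pp, Np in *.
    split; [left; lia|]. split; [right; lia|]. split; [lia|]. split; [lia|].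
    split; [right; left; lia|]. split; [right; right; lia|].
    left. destruct HXs as [HXs|HXs]; [left; lia|right; left; lia].
  - specialize (HNX HX). specialize (HNY HY).
    assert (exists Z1 Zn, x1 <= Z1 /\ y1 <= Z1 /\ (Z1 = x1 \/ Z1 = y1) /\
       Zn <= x1 - x2 - 2 /\ Zn <= y1 - y2 - 2 /\ (Zn = x1 - x2 - 2 \/ Zn = y1 - y2 - 2))
      as [Z1 [Zn HZ]].
    { destruct (Z.le_ge_cases x1 y1); destruct (Z.le_ge_cases (x1 - x2 - 2) (y1 - y2 - 2)).
      - exists y1, (x1 - x2 - 2). lia.
      - exists y1, (y1 - y2 - 2). lia.
      - exists x1, (x1 - x2 - 2). lia.
      - exists x1, (y1 - y2 - 2). lia. }
    exists (Z1 - x1), (Z1 - 2 - Zn - x2), (Z1 - y1), (Z1 - 2 - Zn - y2).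
    unfold Pp, Np in *.
    split; [left; lia|]. split; [left; lia|]. split; [lia|]. split; [lia|].
    split; [right; left; lia|]. split; [right; left; lia|].
    left; right; left; lia.
Qed.

Lemma hom_false p q J h a b : bigraded_ideal J -> is_hom p q J h -> h a b false = false.
Proof.
  intros HJ Hh. pose proof (hom_add _ _ _ _ Hh a b false false (J_zero _ HJ a b) (J_zero _ HJ a b)) as E.
  simpl in E. destruct (h a b false); simpl in E; congruence.
Qed.

Lemma L0 p q J h a b : bigraded_ideal J -> is_hom p q J h -> J a b true -> h a b true = true ->
  Np a b -> Np (a+p) (b+q).
Proof.
  intros HJ Hh Ja Ht HN.
  assert (Hd : Mp (a+p) (b+q)).
  { apply M2deg_iff. apply (hom_deg _ _ _ _ Hh a b true Ja). exact Ht. }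
  destruct Hd as [HP|HP]; [|exact HP]. exfalso.
  assert (Hr : hom_elt (1 - a) (1 - a) true).
  { intros _. apply M2deg_iff. left. unfold Pp, Np in *. lia. }
  pose proof (hom_lin _ _ _ _ Hh (1-a) (1-a) true a b true Hr Ja) as E.
  rewrite Ht in E. unfold mulM2 in E. rewrite ?andb_true_l in E.
  assert (E1 : mul_nz (1 - a) (1 - a) a b = false).
  { destruct (mul_nz (1 - a) (1 - a) a b) eqn:Em; [|reflexivity].
    apply mul_nz_iff in Em. unfold MNp, Pp, Np in *. lia. }
  assert (E2 : mul_nz (1 - a) (1 - a) (a + p) (b + q) = true).
  { apply mul_nz_iff. left. unfold Pp, Np in *. lia. }
  rewrite E1, E2 in E. rewrite (hom_false _ _ _ _ _ _ HJ Hh) in E. discriminate.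
Qed.

Lemma Lmain p q J f g a0 b0 a b r1 r2 s1 s2 :
  bigraded_ideal J -> is_hom p q J f -> is_hom p q J g ->
  J a0 b0 true -> f a0 b0 true = true -> g a0 b0 true = true -> J a b true ->
  Mp r1 r2 -> Mp s1 s2 -> r1 + a0 = s1 + a -> r2 + b0 = s2 + b ->
  MNp r1 r2 a0 b0 -> MNp s1 s2 a b ->
  (MNp r1 r2 (a0+p) (b0+q) \/ MNp s1 s2 (a+p) (b+q)) ->
  f a b true = g a b true.
Proof.
  intros HJ Hf Hg J0 F0 G0 Ja Hr Hs E1 E2 M1 M2 Hor.
  assert (hr : hom_elt r1 r2 true) by (intros _; apply M2deg_iff; exact Hr).
  assert (hs : hom_elt s1 s2 true) by (intros _; apply M2deg_iff; exact Hs).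
  pose proof (hom_lin _ _ _ _ Hf r1 r2 true a0 b0 true hr J0) as A1.
  pose proof (hom_lin _ _ _ _ Hg r1 r2 true a0 b0 true hr J0) as A2.
  pose proof (hom_lin _ _ _ _ Hf s1 s2 true a b true hs Ja) as B1.
  pose proof (hom_lin _ _ _ _ Hg s1 s2 true a b true hs Ja) as B2.
  unfold mulM2 in *. rewrite ?andb_true_l in *.
  apply mul_nz_iff in M1. apply mul_nz_iff in M2.
  rewrite M1, F0 in A1. rewrite M1, G0 in A2. rewrite M2 in B1, B2.
  rewrite E1, E2 in A1, A2.
  rewrite A1 in B1. rewrite A2 in B2.
  destruct Hor as [H|H]; apply mul_nz_iff in H; rewrite H in *.
  - destruct (f a b true), (g a b true); simpl in *; congruence.
  - destruct (f a b true), (g a b true); simpl in *; congruence.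
Qed.

Theorem lemmaA3 (p q : Z) (J : Z -> Z -> bool -> Prop) (f g : Z -> Z -> bool -> bool) :
  bigraded_ideal J -> is_hom p q J f -> is_hom p q J g ->
  (exists a b : Z, J a b true /\ f a b true <> false /\ f a b true = g a b true) ->
  forall (a b : Z) (x : bool), J a b x -> f a b x = g a b x.
Proof.
  intros HJ Hf Hg [a0 [b0 [J0 [F0 G0]]]] a b x Ja.
  destruct x.
  2:{ rewrite (hom_false _ _ _ _ _ _ HJ Hf), (hom_false _ _ _ _ _ _ HJ Hg). reflexivity. }
  assert (F0' : f a0 b0 true = true) by (destruct (f a0 b0 true); congruence).
  assert (G0' : g a0 b0 true = true) by congruence.
  destruct (f a b true) eqn:Fy; destruct (g a b true) eqn:Gy; try reflexivity.
  -
    assert (HX : Mp a0 b0) by (apply M2deg_iff, (J_sub _ HJ a0 b0 true J0); reflexivity).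
    assert (HY : Mp a b) by (apply M2deg_iff, (J_sub _ HJ a b true Ja); reflexivity).
    assert (HXs : Mp (a0+p) (b0+q)) by (apply M2deg_iff, (hom_deg _ _ _ _ Hf a0 b0 true J0); exact F0').
    assert (HYs : Mp (a+p) (b+q)) by (apply M2deg_iff, (hom_deg _ _ _ _ Hf a b true Ja); exact Fy).
    destruct (arith a0 b0 a b p q HX HXs HY HYs
      (L0 _ _ _ _ _ _ HJ Hf J0 F0') (L0 _ _ _ _ _ _ HJ Hf Ja Fy))
      as [r1 [r2 [s1 [s2 [H1 [H2 [H3 [H4 [H5 [H6 H7]]]]]]]]]].
    pose proof (Lmain p q J f g a0 b0 a b r1 r2 s1 s2 HJ Hf Hg J0 F0' G0' Ja H1 H2 H3 H4 H5 H6 H7) as E.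
    rewrite Fy, Gy in E; discriminate.
  - assert (HX : Mp a0 b0) by (apply M2deg_iff, (J_sub _ HJ a0 b0 true J0); reflexivity).
    assert (HY : Mp a b) by (apply M2deg_iff, (J_sub _ HJ a b true Ja); reflexivity).
    assert (HXs : Mp (a0+p) (b0+q)) by (apply M2deg_iff, (hom_deg _ _ _ _ Hf a0 b0 true J0); exact F0').
    assert (HYs : Mp (a+p) (b+q)) by (apply M2deg_iff, (hom_deg _ _ _ _ Hg a b true Ja); exact Gy).
    destruct (arith a0 b0 a b p q HX HXs HY HYs
      (L0 _ _ _ _ _ _ HJ Hf J0 F0') (L0 _ _ _ _ _ _ HJ Hg Ja Gy))
      as [r1 [r2 [s1 [s2 [H1 [H2 [H3 [H4 [H5 [H6 H7]]]]]]]]]].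
    pose proof (Lmain p q J f g a0 b0 a b r1 r2 s1 s2 HJ Hf Hg J0 F0' G0' Ja H1 H2 H3 H4 H5 H6 H7) as E.
    rewrite Fy, Gy in E; discriminate.
Qed.
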